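(* Let $\mathcal X$ be a separable metric space with at least two points, $\Omega=\mathcal X^{\mathbb N}$ with the product topology, and $\Sigma$ a $\sigma$-algebra on $\Omega$ containing all open sets. For every finitely additive probability $P$ on $(\Omega,\Sigma)$ there exists a strongly nonatomic finitely additive probability $\widetilde P$ on $(\Omega,\Sigma)$ such that $P(U)\le\widetilde P(U)$ for every open set $U\subseteq\Omega$.
   Context: A finitely additive probability $P$ on $(\Omega,\Sigma)$ is strongly nonatomic if for every $E\in\Sigma$ and $\alpha\in[0,1]$ there is $F\in\Sigma$ with $F\subseteq E$ and $P(F)=\alpha P(E)$. *)

(* Defs.v *)
From Stdlib Require Import Reals List.
Open Scope R_scope.

Definition is_metric {X : Type} (d : X -> X -> R) : Prop :=
  (forall x y, 0 <= d x y) /\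
  (forall x y, d x y = 0 <-> x = y) /\
  (forall x y, d x y = d y x) /\
  (forall x y z, d x z <= d x y + d y z).

(* Separable: has a countable dense subset (X is nonempty in our use). *)
Definition separable {X : Type} (d : X -> X -> R) : Prop :=
  exists s : nat -> X, forall x eps, 0 < eps -> exists n, d x (s n) < eps.

Definition metric_open {X : Type} (d : X -> X -> R) (V : X -> Prop) : Prop :=
  forall x, V x -> exists eps, 0 < eps /\ forall y, d x y < eps -> V y.

(* Open sets of Omega = X^N with the product topology: every point of U has a
   basic open neighbourhood  prod_{i in F} V_i x prod_{i notin F} X  inside U,
   with F finite and each V_i open in X. *)
Definition product_open {X : Type} (d : X -> X -> R) (U : (nat -> X) -> Prop)
  : Prop :=
  forall w, U w ->
    exists (F : list nat) (V : nat -> X -> Prop),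
      (forall i, metric_open d (V i)) /\
      (forall i, In i F -> V i (w i)) /\
      (forall w', (forall i, In i F -> V i (w' i)) -> U w').

Definition sigma_algebra {Om : Type} (S : (Om -> Prop) -> Prop) : Prop :=
  S (fun _ => True) /\
  (forall A, S A -> S (fun w => ~ A w)) /\
  (forall A : nat -> Om -> Prop, (forall n, S (A n)) ->
     S (fun w => exists n, A n w)).

Definition fa_probability {Om : Type} (S : (Om -> Prop) -> Prop)
  (P : (Om -> Prop) -> R) : Prop :=
  (forall A, S A -> 0 <= P A) /\
  P (fun _ => True) = 1 /\
  (forall A B, S A -> S B -> (forall w, A w -> B w -> False) ->
     P (fun w => A w \/ B w) = P A + P B).

Definition strongly_nonatomic {Om : Type} (S : (Om -> Prop) -> Prop)
  (P : (Om -> Prop) -> R) : Prop :=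
  forall E alpha, S E -> 0 <= alpha <= 1 ->
    exists F, S F /\ (forall w, F w -> E w) /\ P F = alpha * P E.

(* Main.v *)
Require Import Defs.
From Stdlib Require Import Reals List.
From mathcomp Require all_boot classical_sets boolp filter.
Module UFM.
From mathcomp Require Import all_boot classical_sets boolp filter.
Lemma ultra_exists (I : Type) (B : (I -> Prop) -> Prop) :
  (exists A, B A) ->
  (forall A1 A2, B A1 -> B A2 -> exists A3, B A3 /\ forall i, A3 i -> A1 i /\ A2 i) ->
  (forall A, B A -> exists i, A i) ->
  exists U : (I -> Prop) -> Prop,
    (forall A, B A -> U A) /\
    (forall A1 A2, U A1 -> U A2 -> U (fun i => A1 i /\ A2 i)) /\
    (forall A1 A2 : I -> Prop, (forall i, A1 i -> A2 i) -> U A1 -> U A2) /\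
    ~ U (fun _ => False) /\ (forall A, U A \/ U (fun i => ~ A i)).
Proof.
move=> [A0 BA0] Hint Hne.
have FF : Filter (filter_from B id).
  apply: filter_from_filter; first by exists A0.
  move=> i j Bi Bj; have [k [Bk Hk]] := Hint _ _ Bi Bj.
  by exists k => // x /Hk [].
have PF : ProperFilter (filter_from B id).
  apply: filter_from_proper => i Bi; have [x Hx] := Hne _ Bi; by exists x.
have [G [UG sub]] := ultraFilterLemma PF.
exists G; split; [|split; [|split; [|split]]].
- move=> A BA; apply: sub; exists A => //.
- move=> A1 A2 H1 H2; exact: (filterI H1 H2).
- move=> A1 A2 H; apply: filterS => x; exact: H.
- move=> H; apply: (filter_not_empty G).
  by apply: filterS H.
- move=> A; exact: (in_ultra_setVsetC A UG).
Qed.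

End UFM.
From Stdlib Require Import Reals List Lia Lra Classical FunctionalExtensionality PropExtensionality ClassicalEpsilon Arith.
Open Scope R_scope.

Lemma set_ext {T : Type} (A B : T -> Prop) : (forall w, A w <-> B w) -> A = B.
Proof. intro H; apply functional_extensionality; intro w; apply propositional_extensionality; auto. Qed.

Section Gen.
End Gen.

Lemma S_compl {T} (S : (T -> Prop) -> Prop) A : sigma_algebra S -> S A -> S (fun w => ~ A w).
Proof. intros [_ [H _]] HA; auto. Qed.

Lemma S_empty {T} (S : (T -> Prop) -> Prop) : sigma_algebra S -> S (fun _ => False).
Proof. intros hS. replace (fun _ : T => False) with (fun w : T => ~ (fun _ => True) w).
  apply S_compl; auto. apply hS. apply set_ext; intuition. Qed.

Lemma S_union {T} (S : (T -> Prop) -> Prop) A B : sigma_algebra S -> S A -> S B -> S (fun w => A w \/ B w).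
Proof. intros hS HA HB. destruct hS as [_ [_ H]].
  replace (fun w => A w \/ B w) with (fun w => exists n, (fun n => match n with 0%nat => A | _ => B end) n w).
  apply H. intros [|n]; auto.
  apply set_ext; intro w; split. intros [[|n] Hn]; auto. intros [H1|H1]. exists 0%nat; auto. exists 1%nat; auto. Qed.

Lemma S_inter {T} (S : (T -> Prop) -> Prop) A B : sigma_algebra S -> S A -> S B -> S (fun w => A w /\ B w).
Proof. intros hS HA HB.
  replace (fun w => A w /\ B w) with (fun w => ~ (fun w => ~ A w \/ ~ B w) w).
  apply S_compl; auto. apply S_union; auto; apply S_compl; auto.
  apply set_ext; intro w; simpl; tauto. Qed.

Lemma S_count {T} (S : (T -> Prop) -> Prop) (A : nat -> T -> Prop) : sigma_algebra S -> (forall n, S (A n)) -> S (fun w => exists n, A n w).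
Proof. intros hS; apply hS. Qed.

Lemma fa_empty {T} S (mu : (T -> Prop) -> R) : sigma_algebra S -> fa_probability S mu -> mu (fun _ => False) = 0.
Proof. intros hS [_ [_ H]]. assert (E := H _ _ (S_empty S hS) (S_empty S hS) (fun _ h _ => h)).
  cbv beta in E. replace (fun w : T => False \/ False) with (fun _ : T => False) in E. lra. apply set_ext; tauto. Qed.

Lemma fa_add {T} S (mu : (T -> Prop) -> R) A B : fa_probability S mu -> S A -> S B ->
  (forall w, A w -> B w -> False) -> mu (fun w => A w \/ B w) = mu A + mu B.
Proof. intros [_ [_ H]]; auto. Qed.

Lemma fa_split {T} S (mu : (T -> Prop) -> R) A C : sigma_algebra S -> fa_probability S mu -> S A -> S C ->
  mu A = mu (fun w => A w /\ C w) + mu (fun w => A w /\ ~ C w).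
Proof. intros hS hm HA HC. rewrite <- (fa_add S mu); auto.
  f_equal. apply set_ext; intro w; tauto.
  apply S_inter; auto. apply S_inter; auto. apply S_compl; auto. intros w; tauto. Qed.

Lemma fa_nonneg {T} S (mu : (T -> Prop) -> R) A : fa_probability S mu -> S A -> 0 <= mu A.
Proof. intros [H _]; auto. Qed.

Lemma fa_mono {T} S (mu : (T -> Prop) -> R) A B : sigma_algebra S -> fa_probability S mu -> S A -> S B ->
  (forall w, A w -> B w) -> mu A <= mu B.
Proof. intros hS hm HA HB Hs. rewrite (fa_split S mu B A); auto.
  replace (fun w => B w /\ A w) with A. assert (0 <= mu (fun w => B w /\ ~ A w)).
  apply (fa_nonneg S); auto. apply S_inter; auto; apply S_compl; auto. lra.
  apply set_ext; intro w; split; auto. tauto. Qed.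

Lemma fa_le1 {T} S (mu : (T -> Prop) -> R) A : sigma_algebra S -> fa_probability S mu -> S A -> mu A <= 1.
Proof. intros hS hm HA. destruct hm as [h1 [h2 h3]] eqn:E. rewrite <- h2. apply (fa_mono S); auto. apply hS. Qed.

Lemma fa_compl {T} S (mu : (T -> Prop) -> R) A : sigma_algebra S -> fa_probability S mu -> S A ->
  mu A + mu (fun w => ~ A w) = 1.
Proof. intros hS hm HA. pose proof hm as [_ [h2 _]]. rewrite <- h2.
  rewrite (fa_split S mu (fun _ => True) A); auto. 2: apply hS. f_equal; f_equal; apply set_ext; intuition. Qed.

Lemma fa_ext {T} (mu : (T -> Prop) -> R) A B : (forall w, A w <-> B w) -> mu A = mu B.
Proof. intros H; rewrite (set_ext A B H); auto. Qed.

Lemma R_eq_approx (a b : R) : (forall n : nat, Rabs (a - b) <= / INR (S n)) -> a = b.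
Proof. intros H. destruct (Req_dec a b) as [e|ne]; auto. exfalso.
  assert (hp : 0 < Rabs (a - b)) by (apply Rabs_pos_lt; lra).
  destruct (archimed_cor1 _ hp) as [N [HN1 HN2]].
  specialize (H N). assert (/ INR (S N) <= / INR N). apply Rinv_le_contravar. apply lt_0_INR; auto. apply le_INR; lia. lra. Qed.

Lemma eventually_small (eps M : R) : 0 < eps -> exists n0, forall n, (n0 <= n)%nat -> M / INR (S n) <= eps.
Proof. intros He. destruct (INR_archimed eps M He) as [n0 Hn0]. exists n0. intros n Hn.
  assert (INR n0 <= INR (S n)) by (apply le_INR; lia). assert (0 < INR (S n)) by (apply lt_0_INR; lia).
  unfold Rdiv. apply (Rmult_le_reg_r (INR (S n))); auto. rewrite Rmult_assoc, Rinv_l; nra. Qed.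


Lemma disc_ivt (f : nat -> R) (t : R) : (forall j, f j <= f (S j)) -> f 0%nat <= t ->
  forall k, t <= f k -> exists j, f j <= t /\ t <= f (S j).
Proof. intros Hm H0 k. induction k as [|k IH]; intros Hk.
  exists 0%nat; split; auto. specialize (Hm 0%nat); lra.
  destruct (Rle_dec t (f k)) as [h|h]. auto. exists k; split; lra. Qed.

Lemma sc_step {T} SS (mu : (T -> Prop) -> R) (L : nat -> T -> Prop) k r :
  sigma_algebra SS -> fa_probability SS mu -> (forall j, SS (L j)) ->
  (forall j w, L j w -> L (S j) w) -> (forall w, ~ L 0%nat w) ->
  (forall j, mu (fun w => L (S j) w /\ ~ L j w) <= r) -> mu (fun w => ~ L k w) = 0 ->
  forall F G t, SS F -> SS G -> (forall w, F w -> G w) -> mu F <= t <= mu G ->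
  exists F' G', SS F' /\ SS G' /\ (forall w, F w -> F' w) /\ (forall w, F' w -> G' w) /\
     (forall w, G' w -> G w) /\ mu F' <= t <= mu G' /\ mu G' - mu F' <= r.
Proof.
  intros hS hm HL Hinc H0 Hr Hk F G t HF HG HFG Ht.
  set (Fj := fun j w => F w \/ (G w /\ L j w)).
  assert (SF : forall j, SS (Fj j)). { intro j; apply S_union; auto; apply S_inter; auto. }
  assert (Hmon : forall j, mu (Fj j) <= mu (Fj (S j))).
  { intro j; apply (fa_mono SS); auto. unfold Fj; intros w [h|[h1 h2]]; auto. }
  assert (Hgap : forall j, mu (Fj (S j)) - mu (Fj j) <= r).
  { intro j. rewrite (fa_split SS mu (Fj (S j)) (Fj j)); auto.
    replace (fun w => Fj (S j) w /\ Fj j w) with (Fj j).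
    2:{ apply set_ext; intro w; unfold Fj; split. intros [h|[h1 h2]]; split; auto. tauto. }
    assert (mu (fun w => Fj (S j) w /\ ~ Fj j w) <= mu (fun w => L (S j) w /\ ~ L j w)).
    { apply (fa_mono SS); auto. apply S_inter; auto. apply S_compl; auto. apply S_inter; auto. apply S_compl; auto.
      unfold Fj; intros w; tauto. }
    specialize (Hr j); lra. }
  assert (Hf0 : mu (Fj 0%nat) = mu F). { apply fa_ext; intro w; unfold Fj; split; try tauto. intros [h|[_ h]]; auto. destruct (H0 w h). }
  assert (Hfk : mu (Fj k) = mu G).
  { rewrite (fa_split SS mu G (Fj k)); auto.
    replace (fun w => G w /\ Fj k w) with (Fj k).
    2:{ apply set_ext; intro w; unfold Fj; split. intros [h|[h1 h2]]; split; auto. tauto. }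
    assert (0 <= mu (fun w => G w /\ ~ Fj k w)). { apply (fa_nonneg SS); auto. apply S_inter; auto. apply S_compl; auto. }
    assert (mu (fun w => G w /\ ~ Fj k w) <= mu (fun w => ~ L k w)).
    { apply (fa_mono SS); auto. apply S_inter; auto. apply S_compl; auto. apply S_compl; auto.
      unfold Fj; intros w; tauto. }
    lra. }
  destruct (disc_ivt (fun j => mu (Fj j)) t Hmon ltac:(simpl; lra) k ltac:(simpl; lra)) as [j [Hj1 Hj2]].
  exists (Fj j), (Fj (S j)). repeat split; auto; try lra; try apply Hgap.
  all: try (unfold Fj; intros w h; left; exact h).
  all: try (unfold Fj; intros w [h|[h1 h2]]; auto; fail).
Qed.

Definition Inv {T} (SS : (T -> Prop) -> Prop) (mu : (T -> Prop) -> R) E t (p : (T -> Prop) * (T -> Prop)) :=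
  SS (fst p) /\ SS (snd p) /\ (forall w, fst p w -> snd p w) /\ (forall w, snd p w -> E w) /\
  mu (fst p) <= t <= mu (snd p).

Lemma sc_sn {T} SS (mu : (T -> Prop) -> R) :
  sigma_algebra SS -> fa_probability SS mu ->
  (forall n : nat, exists (L : nat -> T -> Prop) (k : nat), (forall j, SS (L j)) /\
     (forall j w, L j w -> L (S j) w) /\ (forall w, ~ L 0%nat w) /\
     (forall j, mu (fun w => L (S j) w /\ ~ L j w) <= / INR (S n)) /\ mu (fun w => ~ L k w) = 0) ->
  strongly_nonatomic SS mu.
Proof.
  intros hS hm HC E alpha HE Ha.
  set (t := alpha * mu E).
  assert (HmE : 0 <= mu E) by (apply (fa_nonneg SS); auto).
  assert (Hstep : forall n p, Inv SS mu E t p -> exists q, Inv SS mu E t q /\ (forall w, fst p w -> fst q w) /\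
     (forall w, snd q w -> snd p w) /\ mu (snd q) - mu (fst q) <= / INR (S n)).
  { intros n [F G] [h1 [h2 [h3 [h4 h5]]]]; simpl in *.
    destruct (HC n) as [L [k [c1 [c2 [c3 [c4 c5]]]]]].
    destruct (sc_step SS mu L k (/ INR (S n)) hS hm c1 c2 c3 c4 c5 F G t h1 h2 h3 h5) as
       [F' [G' [d1 [d2 [d3 [d4 [d5 [d6 d7]]]]]]]].
    exists (F', G'); repeat split; simpl; auto; try lra. }
  set (nxt := fun n (p : (T -> Prop) * (T -> Prop)) => epsilon (inhabits p) (fun q => Inv SS mu E t p -> Inv SS mu E t q /\ (forall w, fst p w -> fst q w) /\
     (forall w, snd q w -> snd p w) /\ mu (snd q) - mu (fst q) <= / INR (S n))).
  assert (Hnxt : forall n p, Inv SS mu E t p -> Inv SS mu E t (nxt n p) /\ (forall w, fst p w -> fst (nxt n p) w) /\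
     (forall w, snd (nxt n p) w -> snd p w) /\ mu (snd (nxt n p)) - mu (fst (nxt n p)) <= / INR (S n)).
  { intros n p Hp. unfold nxt.
    match goal with |- ?G => let P := eval pattern (epsilon (inhabits p) (fun q => Inv SS mu E t p -> Inv SS mu E t q /\ (forall w, fst p w -> fst q w) /\
     (forall w, snd q w -> snd p w) /\ mu (snd q) - mu (fst q) <= / INR (S n))) in G in idtac end.
    refine (epsilon_spec (inhabits p) (fun q => Inv SS mu E t p -> Inv SS mu E t q /\ (forall w, fst p w -> fst q w) /\
     (forall w, snd q w -> snd p w) /\ mu (snd q) - mu (fst q) <= / INR (S n)) _ Hp).
    destruct (Hstep n p Hp) as [q Hq]. exists q; auto. }
  set (sq := fix sq (n : nat) : (T -> Prop) * (T -> Prop) := match n with 0%nat => ((fun _ => False), E) | S n => nxt n (sq n) end).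
  assert (Hinv : forall n, Inv SS mu E t (sq n)).
  { induction n as [|n IH].
    - simpl. unfold Inv; simpl. assert (h0 := fa_empty SS mu hS hm).
      assert (alpha * mu E <= mu E) by nra. assert (0 <= alpha * mu E) by nra.
      split; [apply S_empty; auto|]. split; [auto|]. split; [tauto|]. split; [auto|]. unfold t; split; lra.
    - simpl. apply Hnxt; auto. }
  assert (Hmono : forall n m, (n <= m)%nat -> (forall w, fst (sq n) w -> fst (sq m) w) /\ (forall w, snd (sq m) w -> snd (sq n) w)).
  { intros n m Hnm. induction Hnm as [|m Hnm IH]. split; auto.
    destruct IH as [IH1 IH2]. destruct (Hnxt m (sq m) (Hinv m)) as [_ [e1 [e2 _]]]. simpl. split; auto. }
  set (F := fun w => exists n, fst (sq n) w).
  assert (HSF : SS F). { apply S_count; auto. intro n; apply (Hinv n). }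
  assert (HFG : forall n w, F w -> snd (sq n) w).
  { intros n w [m Hm]. destruct (le_lt_dec m n) as [h|h].
    - apply (Hinv n). apply (Hmono m n h); auto.
    - apply (Hmono n m ltac:(lia)). apply (Hinv m); auto. }
  exists F. split; auto. split.
  - intros w Hw. apply (HFG 0%nat w Hw).
  - fold t. apply R_eq_approx. intro n.
    destruct (Hinv (S n)) as [i1 [i2 [i3 [i4 i5]]]].
    destruct (Hnxt n (sq n) (Hinv n)) as [_ [_ [_ g]]]. simpl in g.
    assert (mu (fst (sq (S n))) <= mu F). { apply (fa_mono SS); auto. intros w h; exists (S n); auto. }
    assert (mu F <= mu (snd (sq (S n)))). { apply (fa_mono SS); auto; try apply HFG. }
    simpl in *. apply Rabs_le; lra.
Qed.


Definition ultra {I : Type} (U : (I -> Prop) -> Prop) :=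
  (forall A1 A2, U A1 -> U A2 -> U (fun i => A1 i /\ A2 i)) /\
  (forall A1 A2 : I -> Prop, (forall i, A1 i -> A2 i) -> U A1 -> U A2) /\
  ~ U (fun _ => False) /\ (forall A, U A \/ U (fun i => ~ A i)).

Definition islim {I : Type} (U : (I -> Prop) -> Prop) (f : I -> R) (c : R) :=
  forall eps, 0 < eps -> U (fun i => Rabs (f i - c) < eps).

Lemma U_ne {I} (U : (I -> Prop) -> Prop) A : ultra U -> U A -> exists i, A i.
Proof. intros [h1 [h2 [h3 h4]]] HA. apply NNPP; intro hn. apply h3. apply (h2 A); auto.
  intros i Ai; apply hn; exists i; auto. Qed.

Lemma U_and {I} (U : (I -> Prop) -> Prop) A B : ultra U -> U A -> U B -> U (fun i => A i /\ B i).
Proof. intros [h1 _] ; auto. Qed.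

Lemma U_mono {I} (U : (I -> Prop) -> Prop) (A B : I -> Prop) : ultra U -> (forall i, A i -> B i) -> U A -> U B.
Proof. intros [_ [h2 _]]; eauto. Qed.

Lemma lim_exists {I} (U : (I -> Prop) -> Prop) f : ultra U -> U (fun i => 0 <= f i <= 1) -> exists c, islim U f c.
Proof.
  intros hU Hb. set (E := fun t => U (fun i => t <= f i)).
  assert (HE0 : E 0). { apply (U_mono U _ _ hU) with (2 := Hb). intros i h; apply h. }
  assert (Hbd : forall t, E t -> t <= 1).
  { intros t Ht. destruct (Rle_dec t 1) as [h|h]; auto. exfalso.
    destruct (U_ne U _ hU (U_and U _ _ hU Ht Hb)) as [i [h1 [h2 h3]]]. lra. }
  destruct (completeness E) as [c [Hub Hlub]]. exists 1; intros t Ht; apply Hbd; auto. exists 0; auto.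
  exists c. intros eps He.
  assert (H1 : U (fun i => c - eps < f i)).
  { apply NNPP; intro hn. assert (c <= c - eps); [|lra]. apply Hlub. intros t Ht.
    destruct (Rle_dec t (c - eps)) as [h|h]; auto. exfalso; apply hn.
    apply (U_mono U _ _ hU) with (2 := Ht). intros i hi; lra. }
  assert (H2 : U (fun i => f i < c + eps)).
  { pose proof hU as [_ [_ [_ h4]]]. destruct (h4 (fun i => f i < c + eps)) as [h|h]; auto.
    assert (E (c + eps)). { apply (U_mono U _ _ hU) with (2 := h). intros i hi; lra. }
    specialize (Hub _ H). lra. }
  apply (U_mono U _ _ hU) with (2 := U_and U _ _ hU H1 H2). intros i [h1 h2]. apply Rabs_def1; lra.
Qed.

Lemma lim_unique {I} (U : (I -> Prop) -> Prop) f c c' : ultra U -> islim U f c -> islim U f c' -> c = c'.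
Proof.
  intros hU H1 H2. destruct (Req_dec c c') as [e|ne]; auto. exfalso.
  assert (hp : 0 < Rabs (c - c') / 2). { assert (0 < Rabs (c - c')) by (apply Rabs_pos_lt; lra). lra. }
  destruct (U_ne U _ hU (U_and U _ _ hU (H1 _ hp) (H2 _ hp))) as [i [a1 a2]].
  assert (Rabs (c - c') <= Rabs (f i - c') + Rabs (f i - c)).
  { replace (c - c') with ((f i - c') - (f i - c)) by ring. apply Rabs_triang_inv2 || (eapply Rle_trans; [apply Rabs_triang|]; rewrite Rabs_Ropp; lra). }
  lra.
Qed.

Lemma lim_plus {I} (U : (I -> Prop) -> Prop) f g a b : ultra U -> islim U f a -> islim U g b ->
  islim U (fun i => f i + g i) (a + b).
Proof.
  intros hU Hf Hg eps He. assert (he2 : 0 < eps / 2) by lra.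
  apply (U_mono U _ _ hU) with (2 := U_and U _ _ hU (Hf _ he2) (Hg _ he2)).
  intros i [h1 h2]. replace (f i + g i - (a + b)) with ((f i - a) + (g i - b)) by ring.
  eapply Rle_lt_trans; [apply Rabs_triang|]. lra.
Qed.

Lemma lim_le {I} (U : (I -> Prop) -> Prop) f c r : ultra U -> islim U f c ->
  (forall eps, 0 < eps -> U (fun i => f i <= r + eps)) -> c <= r.
Proof.
  intros hU Hf H. destruct (Rle_dec c r) as [h|h]; auto. exfalso.
  assert (hp : 0 < (c - r) / 2) by lra.
  destruct (U_ne U _ hU (U_and U _ _ hU (Hf _ hp) (H _ hp))) as [i [a1 a2]].
  apply Rabs_def2 in a1. lra.
Qed.

Lemma lim_ge {I} (U : (I -> Prop) -> Prop) f c r : ultra U -> islim U f c ->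
  U (fun i => r <= f i) -> r <= c.
Proof.
  intros hU Hf H. destruct (Rle_dec r c) as [h|h]; auto. exfalso.
  assert (hp : 0 < (r - c) / 2) by lra.
  destruct (U_ne U _ hU (U_and U _ _ hU (Hf _ hp) H)) as [i [a1 a2]].
  apply Rabs_def2 in a1. lra.
Qed.

Lemma lim_const {I} (U : (I -> Prop) -> Prop) f c : ultra U -> U (fun i => f i = c) -> islim U f c.
Proof. intros hU H eps He. apply (U_mono U _ _ hU) with (2 := H). intros i h; rewrite h.
  unfold Rminus; rewrite Rplus_opp_r, Rabs_R0; auto. Qed.


Fixpoint sumn (f : nat -> R) (n : nat) : R := match n with 0%nat => 0 | S n => sumn f n + f n end.

Lemma sumn_ext f g n : (forall m, (m < n)%nat -> f m = g m) -> sumn f n = sumn g n.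
Proof. induction n as [|n IHn]; cbn [sumn]; intros H; auto. rewrite IHn, H; auto. Qed.

Lemma sumn_plus f g n : sumn (fun m => f m + g m) n = sumn f n + sumn g n.
Proof. induction n as [|n IHn]; cbn [sumn]; [ring|]. rewrite IHn; ring. Qed.

Lemma sumn_le f g n : (forall m, f m <= g m) -> sumn f n <= sumn g n.
Proof. induction n as [|n IHn]; cbn [sumn]; intros H. lra. specialize (IHn H). specialize (H n). lra. Qed.

Lemma sumn_bounds f n : (forall m, 0 <= f m <= 1) -> 0 <= sumn f n <= INR n.
Proof. induction n as [|n IHn]; cbn [sumn]; intros H. simpl; lra. specialize (IHn H). specialize (H n). rewrite S_INR. lra. Qed.

Lemma sumn_const0 n : sumn (fun _ => 0) n = 0.
Proof. induction n as [|n IHn]; cbn [sumn]; [ring|]. rewrite IHn; ring. Qed.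

Lemma sumn_const1 n : sumn (fun _ => 1) n = INR n.
Proof. induction n as [|n IHn]; cbn [sumn]; [simpl; ring|]. rewrite IHn, S_INR; ring. Qed.

Lemma sumn_tail f n M : (forall m, (M <= m)%nat -> f m = 0) -> (forall m, f m <= 1) -> sumn f n <= INR (Nat.min n M).
Proof. induction n as [|n IHn]; cbn [sumn]; intros H1 H2. simpl; lra.
  destruct (le_lt_dec M n) as [h|h].
  - rewrite (H1 n h). replace (Nat.min (S n) M) with M by lia. replace (Nat.min n M) with M in IHn by lia.
    specialize (IHn H1 H2). lra.
  - replace (Nat.min (S n) M) with (S n) by lia. replace (Nat.min n M) with n in IHn by lia.
    rewrite S_INR. specialize (IHn H1 H2). specialize (H2 n). lra. Qed.

Lemma sumn_mono_len f n p : (forall m, 0 <= f m) -> (n <= p)%nat -> sumn f n <= sumn f p.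
Proof. intros H Hnp. induction Hnp. lra. cbn [sumn]. specialize (H m). lra. Qed.

Lemma sumn_add f n p : sumn f (n + p) = sumn f n + sumn (fun r => f (n + r)%nat) p.
Proof. induction p as [|p IHp]; cbn [sumn]. rewrite Nat.add_0_r; ring. rewrite Nat.add_succ_r; cbn [sumn]. rewrite IHp; ring. Qed.

Lemma count_eq_le j n : sumn (fun r => if Nat.eqb r j then 1 else 0) n <= 1.
Proof. assert (forall n, sumn (fun r => if Nat.eqb r j then 1 else 0) n = if Nat.ltb j n then 1 else 0).
  { induction n0 as [|n0 IHn0]; cbn [sumn]; [simpl; reflexivity|]. rewrite IHn0.
    destruct (Nat.ltb_spec j n0); destruct (Nat.eqb_spec n0 j); destruct (Nat.ltb_spec j (S n0)); try lia; ring. }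
  rewrite H. destruct (Nat.ltb j n); lra. Qed.

Lemma count_mod k j n : (0 < k)%nat ->
  sumn (fun m => if Nat.eqb (m mod k) j then 1 else 0) (S n) <= INR (n / k) + 1.
Proof.
  intros hk. set (g := fun m => if Nat.eqb (m mod k) j then 1 else 0).
  assert (Hb : forall q, sumn g (k * q) <= INR q).
  { induction q as [|q IHq]. rewrite Nat.mul_0_r; simpl; lra.
    replace (k * S q)%nat with (k * q + k)%nat by lia. rewrite sumn_add, S_INR.
    assert (sumn (fun r => g (k * q + r)%nat) k <= 1).
    { rewrite (sumn_ext _ (fun r => if Nat.eqb r j then 1 else 0)). apply count_eq_le.
      intros m hm. unfold g. f_equal. f_equal. rewrite Nat.mul_comm, Nat.add_comm, Nat.Div0.mod_add. rewrite Nat.mod_small; auto. }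
    lra. }
  assert (S n <= k * (n / k + 1))%nat.
  { assert (h1 := Nat.div_mod n k ltac:(lia)). assert (h2 := Nat.mod_upper_bound n k ltac:(lia)). nia. }
  eapply Rle_trans. apply (sumn_mono_len g _ _ ltac:(intro m; unfold g; destruct (Nat.eqb (m mod k) j); lra) H).
  eapply Rle_trans. apply Hb. rewrite plus_INR, INR_1; lra.
Qed.

Definition ind {T} (A : T -> Prop) (w : T) : R := if excluded_middle_informative (A w) then 1 else 0.

Lemma ind_bounds {T} (A : T -> Prop) w : 0 <= ind A w <= 1.
Proof. unfold ind; destruct (excluded_middle_informative (A w)); lra. Qed.

Lemma ind_true {T} (A : T -> Prop) w : A w -> ind A w = 1.
Proof. unfold ind; destruct (excluded_middle_informative (A w)); tauto. Qed.

Lemma ind_false {T} (A : T -> Prop) w : ~ A w -> ind A w = 0.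
Proof. unfold ind; destruct (excluded_middle_informative (A w)); tauto. Qed.

Lemma ind_union {T} (A B : T -> Prop) w : (A w -> B w -> False) -> ind (fun w => A w \/ B w) w = ind A w + ind B w.
Proof. intros H. unfold ind. destruct (excluded_middle_informative (A w)); destruct (excluded_middle_informative (B w));
  destruct (excluded_middle_informative (A w \/ B w)); try tauto; try lra. Qed.

Lemma ind_le {T} (A B : T -> Prop) w : (A w -> B w) -> ind A w <= ind B w.
Proof. intros H. unfold ind. destruct (excluded_middle_informative (A w)); destruct (excluded_middle_informative (B w)); try tauto; lra. Qed.


Section Main.
Variables (X : Type) (d : X -> X -> R) (a b : X).
Hypothesis hd : is_metric d.
Hypothesis hab : a <> b.
Variable SS : ((nat -> X) -> Prop) -> Prop.
Hypothesis hS : sigma_algebra SS.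
Hypothesis hopen : forall U, product_open d U -> SS U.
Variable P : ((nat -> X) -> Prop) -> R.
Hypothesis hP : fa_probability SS P.

Definition yy (x : nat -> X) (m : nat) : nat -> X :=
  fun i => if Nat.ltb i m then x i else if Nat.eqb i (2 * m) then b else a.
Definition code (m : nat) (w : nat -> X) := w (2 * m)%nat = b /\ forall i, (2 * m < i)%nat -> w i = a.

Lemma code_yy x m : code m (yy x m).
Proof. unfold code, yy. split.
  - destruct (Nat.ltb_spec (2*m) m); [lia|]. rewrite Nat.eqb_refl; auto.
  - intros i hi. destruct (Nat.ltb_spec i m); [lia|]. destruct (Nat.eqb_spec i (2*m)); [lia|]. auto. Qed.

Lemma code_unique m m' w : code m w -> code m' w -> m = m'.
Proof. intros [h1 h2] [h1' h2']. destruct (lt_eq_lt_dec m m') as [[h|h]|h]; auto; exfalso.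
  - rewrite (h2 (2*m')%nat ltac:(lia)) in h1'. auto.
  - rewrite (h2' (2*m)%nat ltac:(lia)) in h1. auto. Qed.

Lemma yy_agree x m i : (i < m)%nat -> yy x m i = x i.
Proof. intros h; unfold yy. destruct (Nat.ltb_spec i m); [auto|lia]. Qed.

Definition avg n x (A : (nat -> X) -> Prop) := sumn (fun m => ind A (yy x m)) (S n) / INR (S n).

Lemma INRS_pos n : 0 < INR (S n).
Proof. apply lt_0_INR; lia. Qed.

Lemma avg_bounds n x A : 0 <= avg n x A <= 1.
Proof. unfold avg. assert (h := sumn_bounds (fun m => ind A (yy x m)) (S n) (fun m => ind_bounds _ _)).
  assert (hp := INRS_pos n). split.
  - apply Rmult_le_pos; [lra|]. left; apply Rinv_0_lt_compat; auto.
  - unfold Rdiv. apply (Rmult_le_reg_r (INR (S n))); auto. rewrite Rmult_assoc, Rinv_l; lra. Qed.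

Lemma avg_union n x A B : (forall w, A w -> B w -> False) ->
  avg n x (fun w => A w \/ B w) = avg n x A + avg n x B.
Proof. intros H. unfold avg. rewrite (sumn_ext _ (fun m => ind A (yy x m) + ind B (yy x m))).
  - rewrite sumn_plus. unfold Rdiv; ring.
  - intros m _. apply ind_union. apply H. Qed.

Lemma avg_true n x : avg n x (fun _ => True) = 1.
Proof. unfold avg. rewrite (sumn_ext _ (fun _ => 1)).
  - rewrite sumn_const1. field. apply Rgt_not_eq, INRS_pos.
  - intros m _; apply ind_true; auto. Qed.

Lemma avg_le n x A g : (forall m, ind A (yy x m) <= g m) -> avg n x A <= sumn g (S n) / INR (S n).
Proof. intros H. unfold avg, Rdiv. apply Rmult_le_compat_r. left; apply Rinv_0_lt_compat, INRS_pos.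
  apply sumn_le; auto. Qed.

Definition pt (C : (nat -> X) -> Prop) : nat -> X := epsilon (inhabits (fun _ : nat => a)) C.

Lemma pt_in C : (exists w, C w) -> C (pt C).
Proof. intros h; unfold pt; apply epsilon_spec; auto. Qed.

Fixpoint Q (l : list ((nat -> X) -> Prop)) n A : R :=
  match l with nil => 0 | C :: l => P C * avg n (pt C) A + Q l n A end.

Fixpoint part (Z : (nat -> X) -> Prop) (l : list ((nat -> X) -> Prop)) : Prop :=
  match l with
  | nil => forall w, ~ Z w
  | C :: l => SS C /\ (forall w, C w -> Z w) /\ part (fun w => Z w /\ ~ C w) l
  end.

Definition decides (K : (nat -> X) -> Prop) (l : list ((nat -> X) -> Prop)) :=
  Forall (fun C => (forall w, C w -> K w) \/ (forall w, C w -> ~ K w)) l.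

Definition refine (K : (nat -> X) -> Prop) (l : list ((nat -> X) -> Prop)) :=
  flat_map (fun C => (fun w => C w /\ K w) :: (fun w => C w /\ ~ K w) :: nil) l.

Definition refall (Ks : list ((nat -> X) -> Prop)) := fold_right refine ((fun _ => True) :: nil) Ks.

Lemma P_empty Z : (forall w, ~ Z w) -> P Z = 0.
Proof. intros h. rewrite (fa_ext P Z (fun _ => False)). apply (fa_empty SS); auto. intro w; split; auto. apply h. tauto. Qed.

Lemma Q_true l : forall Z n, SS Z -> part Z l -> Q l n (fun _ => True) = P Z.
Proof. induction l as [|C l IH]; intros Z n HZ Hp; simpl in *.
  - symmetry; apply P_empty; auto.
  - destruct Hp as [h1 [h2 h3]]. rewrite avg_true, (IH (fun w => Z w /\ ~ C w)); auto.
    + rewrite (fa_split SS P Z C); auto. rewrite (fa_ext P (fun w => Z w /\ C w) C). ring.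
      intro w; split; [tauto|auto].
    + apply S_inter; auto. apply S_compl; auto. Qed.

Lemma Q_le l : forall Z n A r, SS Z -> part Z l -> 0 <= r -> (forall x, avg n x A <= r) -> Q l n A <= r * P Z.
Proof. induction l as [|C l IH]; intros Z n A r HZ Hp Hr Ha; simpl in *.
  - rewrite P_empty; auto. lra.
  - destruct Hp as [h1 [h2 h3]].
    assert (IH' := IH (fun w => Z w /\ ~ C w) n A r ltac:(apply S_inter; auto; apply S_compl; auto) h3 Hr Ha).
    rewrite (fa_split SS P Z C); auto. rewrite (fa_ext P (fun w => Z w /\ C w) C).
    2:{ intro w; split; [tauto|auto]. }
    assert (0 <= P C) by (apply (fa_nonneg SS); auto).
    assert (P C * avg n (pt C) A <= P C * r) by (apply Rmult_le_compat_l; auto). lra. Qed.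

Lemma Q_nonneg l : forall Z n A, part Z l -> 0 <= Q l n A.
Proof. induction l as [|C l IH]; intros Z n A Hp; simpl in *. lra.
  destruct Hp as [h1 [h2 h3]]. assert (0 <= P C) by (apply (fa_nonneg SS); auto).
  assert (h := avg_bounds n (pt C) A). assert (0 <= P C * avg n (pt C) A) by (apply Rmult_le_pos; lra).
  specialize (IH _ n A h3). lra. Qed.

Lemma Q_union l n A B : (forall w, A w -> B w -> False) -> Q l n (fun w => A w \/ B w) = Q l n A + Q l n B.
Proof. intros H. induction l as [|C l IH]; simpl. ring. rewrite IH, avg_union; auto. ring. Qed.

Lemma part_ext Z Z' l : (forall w, Z w <-> Z' w) -> part Z l -> part Z' l.
Proof. intros h. rewrite (set_ext Z Z' h). auto. Qed.

Lemma part_refine K l : SS K -> forall Z, part Z l -> part Z (refine K l).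
Proof. intros HK. induction l as [|C l IH]; intros Z Hp; simpl in *; auto.
  destruct Hp as [h1 [h2 h3]]. split; [apply S_inter; auto|]. split; [intros w [hw _]; auto|].
  split; [apply S_inter; auto; apply S_compl; auto|]. split; [intros w [hw hk]; split; auto; tauto|].
  apply part_ext with (fun w => Z w /\ ~ C w). intro w; tauto. apply IH; auto. Qed.

Lemma decides_refine K l : decides K (refine K l).
Proof. induction l as [|C l IH]; simpl. constructor. unfold decides. simpl. constructor.
  left; intros w [_ h]; auto. constructor. right; intros w [_ h]; auto. apply IH. Qed.

Lemma decides_refine_keep K K' l : decides K' l -> decides K' (refine K l).
Proof. induction l as [|C l IH]; intros H; simpl. constructor. inversion H; subst. unfold decides; simpl.
  constructor. destruct H2 as [h|h]; [left|right]; intros w [hw _]; auto.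
  constructor. destruct H2 as [h|h]; [left|right]; intros w [hw _]; auto. apply IH; auto. Qed.

Lemma refall_ok Ks : Forall SS Ks -> part (fun _ => True) (refall Ks) /\ Forall (fun K => decides K (refall Ks)) Ks.
Proof. induction Ks as [|K Ks IH]; intros H; simpl.
  - split; [|constructor]. split; [apply hS|]. split; auto. intros w [_ h]; auto.
  - inversion H; subst. destruct (IH H3) as [i1 i2]. split. apply part_refine; auto.
    constructor. apply decides_refine. eapply Forall_impl; [|exact i2]. intros K' hK'. apply decides_refine_keep; auto. Qed.

Definition Good (Ks : list ((nat -> X) -> Prop)) (N : list ((nat -> X) -> Prop) -> nat)
  (i : list ((nat -> X) -> Prop) * nat) :=
  part (fun _ => True) (fst i) /\ Forall (fun K => decides K (fst i)) Ks /\ (N (fst i) <= snd i)%nat.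

Definition Base (A : list ((nat -> X) -> Prop) * nat -> Prop) :=
  exists Ks N, Forall SS Ks /\ A = Good Ks N.

Lemma Base_ok1 : exists A, Base A.
Proof. exists (Good nil (fun _ => 0%nat)). exists nil, (fun _ => 0%nat). split; auto. Qed.

Lemma Base_ok2 : forall A1 A2, Base A1 -> Base A2 -> exists A3, Base A3 /\ forall i, A3 i -> A1 i /\ A2 i.
Proof. intros A1 A2 [K1 [N1 [h1 e1]]] [K2 [N2 [h2 e2]]]; subst.
  exists (Good (K1 ++ K2) (fun l => Nat.max (N1 l) (N2 l))). split.
  - exists (K1 ++ K2), (fun l => Nat.max (N1 l) (N2 l)). split; auto. apply Forall_app; auto.
  - intros i [g1 [g2 g3]]. apply Forall_app in g2 as [g2 g2']. split; split; auto; split; auto; lia. Qed.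

Lemma Base_ok3 : forall A, Base A -> exists i, A i.
Proof. intros A [Ks [N [h e]]]; subst. destruct (refall_ok Ks h) as [i1 i2].
  exists (refall Ks, N (refall Ks)). split; auto. Qed.

Lemma closed_tail (U0 : (nat -> X) -> Prop) : product_open d U0 ->
  forall x, U0 x -> exists M, forall m, (M <= m)%nat -> U0 (yy x m).
Proof. intros HU x Hx. destruct (HU x Hx) as [F [V [h1 [h2 h3]]]].
  exists (S (fold_right Nat.max 0%nat F)). intros m hm. apply h3. intros i hi.
  assert (i <= fold_right Nat.max 0 F)%nat.
  { clear -hi. induction F as [|j F IH]; simpl in *. contradiction. destruct hi as [e|e]; subst; [lia|]. specialize (IH e); lia. }
  rewrite yy_agree; [auto|lia]. Qed.

Lemma neq_open (c : X) : metric_open d (fun z => z <> c).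
Proof. intros z hz. destruct hd as [m1 [m2 [m3 m4]]].
  assert (0 < d z c). { destruct (m1 z c) as [h|h]; auto. exfalso. apply hz. apply m2; auto. }
  exists (d z c). split; auto. intros y hy e; subst. lra. Qed.

Lemma code_closed m : SS (code m).
Proof.
  assert (H : product_open d (fun w => ~ code m w)).
  { intros w hw. destruct (classic (w (2*m)%nat = b)) as [e|e].
    - assert (exists i, (2*m < i)%nat /\ w i <> a).
      { apply NNPP; intro hn. apply hw. split; auto. intros i hi. apply NNPP; intro h'. apply hn; exists i; auto. }
      destruct H as [i [hi hi']]. exists (i :: nil), (fun _ z => z <> a). split; [intro; apply neq_open|]. split.
      + intros j [e'|[]]; subst; auto.
      + intros w' hw' [c1 c2]. apply (hw' i (or_introl eq_refl)). apply c2; auto.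
    - exists ((2*m)%nat :: nil), (fun _ z => z <> b). split; [intro; apply neq_open|]. split.
      + intros j [e'|[]]; subst; auto.
      + intros w' hw' [c1 c2]. apply (hw' (2*m)%nat (or_introl eq_refl)); auto. }
  apply hopen in H. apply (S_compl SS) in H; auto.
  rewrite (set_ext (code m) (fun w => ~ ~ code m w)); auto. intro w; tauto. Qed.

Lemma dom_lemma (K : (nat -> X) -> Prop) : SS K ->
  (forall x, ~ K x -> exists M, forall m, (M <= m)%nat -> ~ K (yy x m)) ->
  forall l Z, SS Z -> part Z l -> decides K l ->
  forall eps, 0 < eps -> exists n0, forall n, (n0 <= n)%nat -> Q l n K <= P (fun w => Z w /\ K w) + eps.
Proof.
  intros HK Hcl l. induction l as [|C l IH]; intros Z HZ Hp Hdec eps He; simpl in *.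
  - exists 0%nat. intros n _. rewrite P_empty. lra. intros w [h _]; apply (Hp w h).
  - destruct Hp as [h1 [h2 h3]]. inversion Hdec; subst.
    assert (he2 : 0 < eps / 2) by lra.
    destruct (IH (fun w => Z w /\ ~ C w) ltac:(apply S_inter; auto; apply S_compl; auto) h3 H2 _ he2) as [n1 Hn1].
    assert (Hsplit : P (fun w => Z w /\ K w) = P (fun w => C w /\ K w) + P (fun w => (Z w /\ ~ C w) /\ K w)).
    { rewrite (fa_split SS P (fun w => Z w /\ K w) C); auto.
      - f_equal; apply fa_ext; intro w; specialize (h2 w); tauto.
      - apply S_inter; auto. }
    assert (HCK : 0 <= P (fun w => C w /\ K w)) by (apply (fa_nonneg SS); [exact hP|apply S_inter; auto]).
    assert (Hhead : exists n2, forall n, (n2 <= n)%nat -> P C * avg n (pt C) K <= P (fun w => C w /\ K w) + eps / 2).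
    { destruct H1 as [hsub|hdis].
      - exists 0%nat. intros n _. rewrite (fa_ext P (fun w => C w /\ K w) C). 2:{ intro w; split; [tauto|auto]. }
        assert (0 <= P C) by (apply (fa_nonneg SS); auto). assert (h := avg_bounds n (pt C) K).
        assert (P C * avg n (pt C) K <= P C * 1) by (apply Rmult_le_compat_l; lra). lra.
      - destruct (classic (exists w, C w)) as [hne|hemp].
        + assert (hpt := pt_in C hne). destruct (Hcl (pt C) (hdis _ hpt)) as [M HM].
          destruct (eventually_small (eps/2) (INR M) he2) as [n2 Hn2]. exists n2. intros n hn.
          assert (avg n (pt C) K <= INR M / INR (S n)).
          { unfold avg, Rdiv. apply Rmult_le_compat_r. left; apply Rinv_0_lt_compat, INRS_pos.
            eapply Rle_trans. apply (sumn_tail _ _ M). intros m hm; apply ind_false; auto. intro; apply ind_bounds.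
            apply le_INR; lia. }
          specialize (Hn2 n hn). assert (0 <= P C) by (apply (fa_nonneg SS); auto).
          assert (P C <= 1) by (apply (fa_le1 SS); auto). assert (h := avg_bounds n (pt C) K).
          assert (P C * avg n (pt C) K <= 1 * avg n (pt C) K) by (apply Rmult_le_compat_r; lra). lra.
        + exists 0%nat. intros n _. rewrite (P_empty C). assert (h := avg_bounds n (pt C) K). lra.
          intros w hw; apply hemp; exists w; auto. }
    destruct Hhead as [n2 Hn2]. exists (Nat.max n1 n2). intros n hn.
    specialize (Hn1 n ltac:(lia)). specialize (Hn2 n ltac:(lia)). lra.
Qed.

Variable UF : (list ((nat -> X) -> Prop) * nat -> Prop) -> Prop.
Hypothesis hUF : ultra UF.
Hypothesis hUB : forall A, Base A -> UF A.

Definition Qf A (i : list ((nat -> X) -> Prop) * nat) := Q (fst i) (snd i) A.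

Definition Pt (A : (nat -> X) -> Prop) : R := epsilon (inhabits 0) (fun c => islim UF (Qf A) c).

Lemma UGood Ks N : Forall SS Ks -> UF (Good Ks N).
Proof. intros h; apply hUB; exists Ks, N; auto. Qed.

Lemma Pt_spec A : islim UF (Qf A) (Pt A).
Proof. unfold Pt. apply epsilon_spec. apply lim_exists; auto.
  apply (U_mono UF _ _ hUF) with (2 := UGood nil (fun _ => 0%nat) (Forall_nil _)).
  intros i [g1 _]. split. apply (Q_nonneg _ _ _ _ g1).
  assert (h := Q_le (fst i) _ (snd i) A 1 (proj1 hS) g1 ltac:(lra) (fun x => proj2 (avg_bounds _ x A))).
  destruct hP as [_ [e _]]. unfold Qf. rewrite e in h. lra. Qed.

Lemma Pt_nonneg A : 0 <= Pt A.
Proof. apply (lim_ge UF (Qf A)); auto. apply Pt_spec.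
  apply (U_mono UF _ _ hUF) with (2 := UGood nil (fun _ => 0%nat) (Forall_nil _)).
  intros i [g1 _]. apply (Q_nonneg _ _ _ _ g1). Qed.

Lemma Pt_true : Pt (fun _ => True) = 1.
Proof. apply (lim_unique UF (Qf (fun _ => True))); auto. apply Pt_spec. apply lim_const; auto.
  apply (U_mono UF _ _ hUF) with (2 := UGood nil (fun _ => 0%nat) (Forall_nil _)).
  intros i [g1 _]. unfold Qf. rewrite (Q_true _ _ _ (proj1 hS) g1). apply hP. Qed.

Lemma Pt_add A B : (forall w, A w -> B w -> False) -> Pt (fun w => A w \/ B w) = Pt A + Pt B.
Proof. intros H. apply (lim_unique UF (Qf (fun w => A w \/ B w))); auto. apply Pt_spec.
  replace (Qf (fun w => A w \/ B w)) with (fun i => Qf A i + Qf B i).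
  apply lim_plus; auto; apply Pt_spec.
  apply functional_extensionality; intro i; unfold Qf; rewrite Q_union; auto. Qed.

Lemma Pt_fa : fa_probability SS Pt.
Proof. split; [intros; apply Pt_nonneg|]. split; [apply Pt_true|]. intros; apply Pt_add; auto. Qed.

Lemma Pt_dom U0 : product_open d U0 -> P U0 <= Pt U0.
Proof.
  intros HU. set (K := fun w => ~ U0 w).
  assert (HSU : SS U0) by auto. assert (HK : SS K) by (apply S_compl; auto).
  assert (Hcl : forall x, ~ K x -> exists M, forall m, (M <= m)%nat -> ~ K (yy x m)).
  { intros x hx. destruct (closed_tail U0 HU x (NNPP _ hx)) as [M HM]. exists M. intros m hm hk. apply hk; auto. }
  assert (HPK : Pt K <= P K).
  { apply (lim_le UF (Qf K)); auto. apply Pt_spec. intros eps He.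
    assert (Hn : forall l, exists n0, part (fun _ => True) l -> decides K l -> forall n, (n0 <= n)%nat ->
               Q l n K <= P (fun w => True /\ K w) + eps).
    { intros l. destruct (classic (part (fun _ => True) l /\ decides K l)) as [[g1 g2]|hn].
      - destruct (dom_lemma K HK Hcl l _ (proj1 hS) g1 g2 eps He) as [n0 Hn0]. exists n0; auto.
      - exists 0%nat. intros g1 g2; exfalso; auto. }
    set (N := fun l => epsilon (inhabits 0%nat) (fun n0 => part (fun _ => True) l -> decides K l -> forall n, (n0 <= n)%nat ->
               Q l n K <= P (fun w => True /\ K w) + eps)).
    apply (U_mono UF _ _ hUF) with (2 := UGood (K :: nil) N (Forall_cons _ HK (Forall_nil _))).
    intros i [g1 [g2 g3]]. inversion g2; subst.
    assert (hN := epsilon_spec (inhabits 0%nat) _ (Hn (fst i))). fold (N (fst i)) in hN.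
    unfold Qf. rewrite (fa_ext P K (fun w => True /\ K w)). apply hN; auto. intro w; tauto. }
  assert (h1 := fa_compl SS P U0 hS hP HSU). assert (h2 := fa_compl SS Pt U0 hS Pt_fa HSU).
  fold K in h1, h2. lra.
Qed.

Lemma Pt_sc : forall n : nat, exists (L : nat -> (nat -> X) -> Prop) (k : nat), (forall j, SS (L j)) /\
     (forall j w, L j w -> L (S j) w) /\ (forall w, ~ L 0%nat w) /\
     (forall j, Pt (fun w => L (S j) w /\ ~ L j w) <= / INR (S n)) /\ Pt (fun w => ~ L k w) = 0.
Proof.
  intros n. set (k := S n). set (L := fun j w => exists m, (m mod k < j)%nat /\ code m w).
  assert (HL : forall j m x, L j (yy x m) <-> (m mod k < j)%nat).
  { intros j m x; split. intros [m' [h1 h2]]. rewrite <- (code_unique _ _ _ (code_yy x m) h2) in h1; auto.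
    intros h; exists m; split; auto; apply code_yy. }
  exists L, k. split; [|split; [|split; [|split]]].
  - intros j. apply S_count; auto. intros m. destruct (lt_dec (m mod k) j) as [h|h].
    + rewrite (set_ext (fun w => (m mod k < j)%nat /\ code m w) (code m)). apply code_closed. intro w; tauto.
    + rewrite (set_ext (fun w => (m mod k < j)%nat /\ code m w) (fun _ => False)). apply S_empty; auto. intro w; tauto.
  - intros j w [m [h1 h2]]. exists m; split; auto.
  - intros w [m [h _]]. lia.
  - intros j. apply (lim_le UF (Qf (fun w => L (S j) w /\ ~ L j w))); auto. apply Pt_spec. intros eps He.
    destruct (eventually_small eps 1 He) as [n0 Hn0].
    apply (U_mono UF _ _ hUF) with (2 := UGood nil (fun _ => n0) (Forall_nil _)).
    intros [l n'] [g1 [_ g3]]. cbn [fst snd] in *. unfold Qf; cbn [fst snd].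
    assert (Hr : forall x, avg n' x (fun w => L (S j) w /\ ~ L j w) <= / INR k + / INR (S n')).
    { intro x. eapply Rle_trans. apply (avg_le _ _ _ (fun m => if Nat.eqb (m mod k) j then 1 else 0)).
      - intros m. destruct (classic (L (S j) (yy x m) /\ ~ L j (yy x m))) as [[c1 c2]|c].
        + rewrite HL in c1, c2. destruct (Nat.eqb_spec (m mod k) j); [|exfalso; lia]. apply ind_bounds.
        + rewrite ind_false; auto. destruct (Nat.eqb (m mod k) j); lra.
      - assert (hc := count_mod k j n' ltac:(unfold k; lia)).
        assert (hkpos : 0 < INR k) by (apply lt_0_INR; unfold k; lia).
        assert (hN := INRS_pos n').
        assert (hq : INR (n' / k) * INR k <= INR (S n')).
        { rewrite <- mult_INR. apply le_INR. assert (h := Nat.Div0.mul_div_le n' k). lia. }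
        assert (INR (n' / k) / INR (S n') <= / INR k).
        { unfold Rdiv. apply (Rmult_le_reg_r (INR k * INR (S n'))). nra.
          replace (INR (n' / k) * / INR (S n') * (INR k * INR (S n'))) with (INR (n' / k) * INR k) by (field; lra).
          replace (/ INR k * (INR k * INR (S n'))) with (INR (S n')) by (field; lra). auto. }
        assert (h3 : sumn (fun m => if Nat.eqb (m mod k) j then 1 else 0) (S n') / INR (S n') <= (INR (n' / k) + 1) / INR (S n')).
        { unfold Rdiv; apply Rmult_le_compat_r; auto. left; apply Rinv_0_lt_compat; auto. }
        replace ((INR (n' / k) + 1) / INR (S n')) with (INR (n' / k) / INR (S n') + / INR (S n')) in h3 by (field; lra).
        lra. }
    assert (hq := Q_le l _ n' _ (/ INR k + / INR (S n')) (proj1 hS) g1 ltac:(assert (0 < / INR k) by (apply Rinv_0_lt_compat, lt_0_INR; unfold k; lia); assert (0 < / INR (S n')) by (apply Rinv_0_lt_compat, INRS_pos); lra) Hr).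
    destruct hP as [_ [e _]]. rewrite e in hq. specialize (Hn0 n' g3). unfold Rdiv in Hn0. fold k. lra.
  - apply (lim_unique UF (Qf (fun w => ~ L k w))); auto. apply Pt_spec. apply lim_const; auto.
    apply (U_mono UF _ _ hUF) with (2 := UGood nil (fun _ => 0%nat) (Forall_nil _)).
    intros [l n'] _. unfold Qf; simpl. clear - HL. induction l as [|C l IH]; simpl; auto.
    rewrite IH. unfold avg. rewrite (sumn_ext _ (fun _ => 0)). rewrite sumn_const0. unfold Rdiv; ring.
    intros m _. apply ind_false. intro h; apply h. apply HL. apply Nat.mod_upper_bound. unfold k; lia.
Qed.

Lemma Pt_sn : strongly_nonatomic SS Pt.
Proof. apply sc_sn; auto. apply Pt_fa. apply Pt_sc. Qed.

End Main.


Theorem theorem14 (X : Type) (d : X -> X -> R)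
  (hd : is_metric d) (hsep : separable d)
  (htwo : exists x y : X, x <> y)
  (S : ((nat -> X) -> Prop) -> Prop)
  (hS : sigma_algebra S)
  (hopen : forall U, product_open d U -> S U)
  (P : ((nat -> X) -> Prop) -> R)
  (hP : fa_probability S P) :
  exists Pt : ((nat -> X) -> Prop) -> R,
    fa_probability S Pt /\ strongly_nonatomic S Pt /\
    (forall U, product_open d U -> P U <= Pt U).
Proof.
  destruct htwo as [a [b hab]].
  destruct (UFM.ultra_exists _ (Base X S) (Base_ok1 X S) (Base_ok2 X S) (Base_ok3 X S hS)) as [U [hB [h1 [h2 [h3 h4]]]]].
  assert (hU : ultra U) by (split; auto).
  exists (Pt X a b P U). split; [|split].
  - eapply Pt_fa; eauto.
  - eapply Pt_sn; eauto.
  - intros U0 HU0. eapply Pt_dom; eauto.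
Qed.
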